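(* Let $F\subsetneq K$ be fields of characteristic $0$, with $F$ a proper nonempty subfield of $K$. Let $p(x)=\sum_{k=0}^{n}a_k x^k\in K[x]$ be non-constant with $a_n\neq 0$, and let $q(x)=\sum_{j=0}^{m}b_j x^j\in K[x]\setminus F[x]$ with $b_m\neq 0$. Suppose $a_n,b_m\in F$ and $b_j\notin F$ for some $j\geq 1$. Then $p\circ q\notin F[x]$ and $D_F(p\circ q)=D_F(q)$.
   Context: For sets $F\subset K$ and $p(x)=\sum_{k=0}^{n}a_kx^k\in K[x]$ with $a_n\neq 0$, the $F$ deficit $D_F(p)$ is defined as follows: if $p\in K[x]\setminus F[x]$, then $D_F(p)=n-\max\{0\le k\le n: a_k\notin F\}$; if $p\in F[x]$, then $D_F(p)=n$. Here $F[x]$ denotes the set of polynomials with all coefficients in $F$. *)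

(* Defs.v *)
From mathcomp Require Import all_boot all_order all_algebra.
Set Implicit Arguments. Unset Strict Implicit. Unset Printing Implicit Defensive.
Import GRing.Theory.
Local Open Scope ring_scope.

Definition deficit (K : fieldType) (F : {pred K}) (p : {poly K}) : nat :=
  if p \is a polyOver F then (size p).-1
  else ((size p).-1 - \max_(k < size p | (p`_k)%R \notin F) (k : nat))%N.

(* Main.v *)
Require Import Defs.
From mathcomp Require Import all_boot all_order all_algebra.
From HB Require Import structures.
From mathcomp Require Import zify ring.
Import GRing.Theory.
Local Open Scope ring_scope.

Section Main.
Variables (K : fieldType) (F : divringClosed K).
Hypothesis charK0 : [pchar K] =i pred0.

Lemma max_attain (P : {poly K}) : P \isn't a polyOver F ->
  exists r, [/\ (r < size P)%N, P`_r \notin F & forall i, (r < i)%N -> P`_i \in F].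
Proof.
move=> nP; set r := \max_(k < size P | P`_k \notin F) (k : nat); exists r.
have [k0 Hk0] : exists k : 'I_(size P), P`_k \notin F.
  apply/existsP; apply: contraR nP => /existsPn H; apply/polyOverP => i.
  have [lt|ge] := ltnP i (size P); last by rewrite nth_default // rpred0.
  by have := H (Ordinal lt); rewrite negbK.
have := @bigmax_eq_arg _ k0 (fun k : 'I_(size P) => P`_k \notin F) (fun k => nat_of_ord k) Hk0; rewrite -/r.
case: arg_maxnP => //= i Pi maxFi ->.
split => //.
move=> j lt; apply: contraT => Hj.
have [ltj|gej] := ltnP j (size P); last by rewrite nth_default // rpred0 in Hj.
by have := maxFi (Ordinal ltj) Hj; rewrite /= leqNgt lt.
Qed.

Lemma deficit_eq (P : {poly K}) t : (t < size P)%N -> P`_t \notin F ->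
  (forall i, (t < i)%N -> P`_i \in F) ->
  P \isn't a polyOver F /\ deficit F P = ((size P).-1 - t)%N.
Proof.
move=> lt nt hi.
have nP : P \isn't a polyOver F by apply/negP => /polyOverP H; rewrite H in nt.
split => //; rewrite /deficit (negbTE nP); congr (_ - _)%N.
apply/eqP; rewrite eqn_leq; apply/andP; split.
  apply/bigmax_leqP => i Hi; rewrite leqNgt; apply/negP => /hi; by rewrite (negbTE Hi).
by apply: (leq_bigmax_cond (Ordinal lt)).
Qed.

Lemma main (p q : {poly K})
  (p_nonconst : (1 < size p)%N)
  (q_notF : q \isn't a polyOver F)
  (lead_p : lead_coef p \in F)
  (lead_q : lead_coef q \in F)
  (hj : exists j : nat, (1 <= j < size q)%N /\ q`_j \notin F) :
  (p \Po q) \isn't a polyOver F /\ deficit F (p \Po q) = deficit F q.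
Proof.
have [r [rlt qr hr]] := @max_attain q q_notF.
have [_ ->] := deficit_eq q r rlt qr hr.
have [j [/andP [j1 jlt] qj]] := hj.
have jr : (j <= r)%N by rewrite leqNgt; apply/negP => /hr; rewrite (negbTE qj).
set m := (size q).-1.
have sq : size q = m.+1 by rewrite /m; case: (size q) jlt.
have qn0 : q != 0 by rewrite -size_poly_eq0 sq.
have rm : (r < m)%N.
  have : r != m by apply: contraNneq qr => ->; rewrite -lead_coefE.
  by rewrite sq ltnS in rlt; rewrite ltn_neqAle rlt andbT.
have F0 : (0 : K) \in F := rpred0 F.
have qr0 : q`_r != 0 by apply: contraNneq qr => ->.
pose L := \poly_(i < r.+1) q`_i.
pose H := q - L.
have sizeL : size L = r.+1 by rewrite size_poly_eq.
have leadL : lead_coef L = q`_r by rewrite lead_coefE sizeL coef_poly ltnSn.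
have HF : H \is a polyOver F.
  apply/polyOverP => i; rewrite coefB coef_poly; case: ltnP => h.
    by rewrite subrr.
  by rewrite subr0 hr.
have sizeH : size H = size q by rewrite size_polyDl // size_opp sizeL sq ltnS.
have leadH : lead_coef H = lead_coef q by rewrite lead_coefDl // size_opp sizeL sq ltnS.
set b := lead_coef q.
have b0 : b != 0 by rewrite lead_coef_eq0.
have Hn0 : H != 0 by rewrite -size_poly_eq0 sizeH sq.
have [n' sp] : exists n', size p = n'.+2 by case: (size p) p_nonconst => [|[|k]] //; exists k.
set n := n'.+1.
pose T := \sum_(i < n) q ^+ (n.-1 - i) * H ^+ i.
have eqT : q ^+ n = H ^+ n + L * T.
  have hqH : q - H = L by rewrite /H opprB addrC subrK.
  by rewrite /T -hqH -subrXX addrC subrK.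
have sizeqH : forall a c, size (q ^+ a * H ^+ c) = (m * (a + c)).+1.
  move=> a c; rewrite size_mul ?expf_neq0 //.
  have e1 : size (q ^+ a) = (m * a).+1.
    by rewrite polySpred ?expf_neq0 // size_exp -/m mulnC.
  have e2 : size (H ^+ c) = (m * c).+1.
    by rewrite polySpred ?expf_neq0 // size_exp sizeH -/m mulnC.
  by rewrite e1 e2 addSn /= mulnDr addnS.
have leadqH : forall a c, lead_coef (q ^+ a * H ^+ c) = b ^+ (a + c).
  by move=> a c; rewrite lead_coefM !lead_coef_exp leadH exprD.
have coefT : T`_(m * n') = b ^+ n' *+ n.
  rewrite /T coef_sum (eq_bigr (fun _ => b ^+ n')) ?sumr_const ?card_ord //.
  move=> i _; have hi : (n.-1 - i + i = n')%N by rewrite /n /= subnK // -ltnS (ltn_ord i).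
  by have := leadqH (n.-1 - i)%N i; rewrite lead_coefE sizeqH hi /= => ->.
have cT0 : b ^+ n' *+ n != 0.
  by rewrite -mulr_natr mulf_neq0 ?expf_neq0 //; move/pcharf0P: charK0 => ->.
have sizeT : size T = (m * n').+1.
  apply/eqP; rewrite eqn_leq; apply/andP; split.
    rewrite /T (leq_trans (size_sum _ _ _)) //; apply/bigmax_leqP => i _.
    have hi : (n.-1 - i + i = n')%N by rewrite /n /= subnK // -ltnS (ltn_ord i).
    by rewrite sizeqH hi.
  rewrite ltnNge; apply/negP => /(nth_default 0) h.
  by move: cT0; rewrite -coefT h eqxx.
have leadT : lead_coef T = b ^+ n' *+ n by rewrite lead_coefE sizeT.
have T0 : T != 0 by rewrite -size_poly_eq0 sizeT.
have L0 : L != 0 by rewrite -size_poly_eq0 sizeL.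
set t := (r + m * n')%N.
have sizeLT : size (L * T) = t.+1 by rewrite size_mul // sizeL sizeT /t addSn /= addnS.
have leadLT : (L * T)`_t = q`_r * (b ^+ n' *+ n).
  by rewrite -[t]/(t.+1.-1) -sizeLT -lead_coefE lead_coefM leadL leadT.
set a := lead_coef p.
pose S := \sum_(i < n) p`_i *: q ^+ i.
have pqE : p \Po q = S + a *: (H ^+ n + L * T).
  rewrite comp_polyE sp big_ord_recr /= -eqT; congr (_ + _).
  by rewrite /a lead_coefE sp.
have S0 : forall k, (m * n' < k)%N -> S`_k = 0.
  move=> k hk; rewrite /S coef_sum big1 // => i _.
  rewrite coefZ [(q ^+ i)`_k]nth_default ?mulr0 //.
  rewrite polySpred ?expf_neq0 // size_exp -/m.
  apply: leq_trans hk; rewrite ltnS leq_mul2l -ltnS.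
  by have := ltn_ord i => ->; rewrite orbT.
have HnF : H ^+ n \is a polyOver F by rewrite rpredX.
have r1 : (0 < r)%N by apply: leq_trans jr.
have hi : forall i, (t < i)%N -> (p \Po q)`_i \in F.
  move=> i hti; rewrite pqE coefD S0; last by apply: leq_trans hti; rewrite ltnS /t leq_addl.
  rewrite add0r coefZ coefD [(L * T)`_i]nth_default ?sizeLT //.
  by rewrite addr0 rpredM // (polyOverP HnF).
have nt : (p \Po q)`_t \notin F.
  rewrite pqE coefD S0; last by rewrite /t -[X in (X < _)%N]add0n ltn_add2r.
  rewrite add0r coefZ coefD leadLT; apply/negP => hF.
  have a0 : a != 0 by rewrite lead_coef_eq0 -size_poly_eq0 sp.
  have cF : b ^+ n' *+ n \in F by rewrite rpredMn // rpredX.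
  have xF : (H ^+ n)`_t \in F by rewrite (polyOverP HnF).
  have e : q`_r = (a * ((H ^+ n)`_t + q`_r * (b ^+ n' *+ n)) / a - (H ^+ n)`_t) / (b ^+ n' *+ n).
    by field; rewrite a0 expf_neq0 //; move/pcharf0P: charK0 => ->.
  by move: qr; rewrite e rpred_div ?rpredB ?rpred_div.
have szpq : (size (p \Po q)).-1 = (n * m)%N by rewrite size_comp_poly sp.
have tlt : (t < size (p \Po q))%N.
  have : (t < n * m)%N by rewrite /t /n mulSn (mulnC m n') ltn_add2r.
  by rewrite -szpq => h; exact: leq_trans h (leq_pred _).
have [-> ->] := deficit_eq _ _ tlt nt hi; split => //.
by rewrite szpq /t /n mulSn (mulnC m n') subnDr.
Qed.
End Main.

Theorem theorem2 (K : fieldType) (F : {pred K})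
  (charK0 : [pchar K] =i pred0)
  (subF : divring_closed F)
  (properF : exists x : K, x \notin F)
  (p q : {poly K})
  (p_nonconst : (1 < size p)%N)
  (q_notF : q \isn't a polyOver F)
  (lead_p : lead_coef p \in F)
  (lead_q : lead_coef q \in F)
  (hj : exists j : nat, (1 <= j < size q)%N /\ q`_j \notin F) :
  (p \Po q) \isn't a polyOver F /\ deficit F (p \Po q) = deficit F q.
Proof.
pose FF : divringClosed K := HB.pack_for (divringClosed K) F (GRing.isDivringClosed.Build K F subF).
exact: (@main K FF charK0 p q p_nonconst q_notF lead_p lead_q hj).
Qed.
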